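(* For every equation $u_t+uu_x=A^2(t,x)u_{xx}+A^1(t,x)u_x$ of the class $\hat{\mathcal L}_1$, its maximal Lie invariance algebra has dimension at most $2$.
   Context: All functions are smooth. $\hat{\mathcal L}_1$ is the class of equations $u_t+uu_x=A^2(t,x)u_{xx}+A^1(t,x)u_x$ for $u(t,x)$ with smooth arbitrary elements $A^1,A^2$ satisfying $A^2\neq0$ and $A^1_{xx}\neq0$ (superscripts are indices). The maximal Lie invariance algebra is the algebra of all vector fields on $(t,x,u)$ generating one-parameter groups of point symmetries of the equation. *)

(* Defs.v *)
From Stdlib Require Import Reals.
From Coquelicot Require Import Coquelicot.
Open Scope R_scope.

Definition d1 (f : R -> R -> R -> R) : R -> R -> R -> R :=
  fun t x u => Derive (fun s => f s x u) t.
Definition d2 (f : R -> R -> R -> R) : R -> R -> R -> R :=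
  fun t x u => Derive (fun s => f t s u) x.
Definition d3 (f : R -> R -> R -> R) : R -> R -> R -> R :=
  fun t x u => Derive (fun s => f t x s) u.
Definition e1 (f : R -> R -> R) : R -> R -> R :=
  fun t x => Derive (fun s => f s x) t.
Definition e2 (f : R -> R -> R) : R -> R -> R :=
  fun t x => Derive (fun s => f t s) x.

Fixpoint iterD3 (l : list nat) (f : R -> R -> R -> R) : R -> R -> R -> R :=
  match l with
  | nil => f
  | cons O l' => d1 (iterD3 l' f)
  | cons (S O) l' => d2 (iterD3 l' f)
  | cons _ l' => d3 (iterD3 l' f)
  end.
Fixpoint iterD2 (l : list bool) (f : R -> R -> R) : R -> R -> R :=
  match l with
  | nil => f
  | cons true l' => e1 (iterD2 l' f)
  | cons false l' => e2 (iterD2 l' f)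
  end.

Definition smooth3 (f : R -> R -> R -> R) : Prop :=
  forall (l : list nat) (t x u : R),
    ex_derive (fun s => iterD3 l f s x u) t /\
    ex_derive (fun s => iterD3 l f t s u) x /\
    ex_derive (fun s => iterD3 l f t x s) u /\
    continuous (fun p : R * R * R => iterD3 l f (fst (fst p)) (snd (fst p)) (snd p))
               (t, x, u).
Definition smooth2 (f : R -> R -> R) : Prop :=
  forall (l : list bool) (t x : R),
    ex_derive (fun s => iterD2 l f s x) t /\
    ex_derive (fun s => iterD2 l f t s) x /\
    continuous (fun p : R * R => iterD2 l f (fst p) (snd p)) (t, x).

(** A vector field  tau d_t + xi d_x + eta d_u  on (t,x,u)-space. *)
Record vfield := VF {
  vtau : R -> R -> R -> R;
  vxi  : R -> R -> R -> R;
  veta : R -> R -> R -> R }.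

Definition in_class_L1hat (A1 A2 : R -> R -> R) : Prop :=
  smooth2 A1 /\ smooth2 A2 /\
  (forall t x, A2 t x <> 0) /\
  (forall t x, e2 (e2 A1) t x <> 0).

(** Infinitesimal invariance criterion for
      u_t + u u_x = A2(t,x) u_xx + A1(t,x) u_x :
    the second prolongation of Q applied to
      Delta = u_t + u u_x - A2 u_xx - A1 u_x
    vanishes on the manifold Delta = 0 of the second-order jet space
    (jet coordinates t,x,u,u_x,u_tx,u_xx free, u_t = A2 u_xx + A1 u_x - u u_x;
    u_tt does not occur). *)
Definition invariance_condition (A1 A2 : R -> R -> R) (Q : vfield) : Prop :=
  forall t x u ux utx uxx : R,
    let ut := A2 t x * uxx + A1 t x * ux - u * ux in
    let tau := vtau Q in let xi := vxi Q in let eta := veta Q in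
    let Dt f := d1 f t x u + ut * d3 f t x u in
    let Dx f := d2 f t x u + ux * d3 f t x u in
    let Dxx f := d2 (d2 f) t x u + 2 * ux * d2 (d3 f) t x u
                 + uxx * d3 f t x u + ux ^ 2 * d3 (d3 f) t x u in
    let eta_t := Dt eta - ut * Dt tau - ux * Dt xi in
    let eta_x := Dx eta - ut * Dx tau - ux * Dx xi in
    let eta_xx := Dxx eta - ut * Dxx tau - 2 * utx * Dx tau
                  - ux * Dxx xi - 2 * uxx * Dx xi in
    eta_t + eta t x u * ux + u * eta_x
    - (tau t x u * e1 A2 t x + xi t x u * e2 A2 t x) * uxx
    - A2 t x * eta_xx
    - (tau t x u * e1 A1 t x + xi t x u * e2 A1 t x) * ux
    - A1 t x * eta_x = 0.

Definition lie_symmetry (A1 A2 : R -> R -> R) (Q : vfield) : Prop :=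
  smooth3 (vtau Q) /\ smooth3 (vxi Q) /\ smooth3 (veta Q) /\
  invariance_condition A1 A2 Q.

(** A (real vector) space S of vector fields has dimension at most n:
    any n+1 elements of S are linearly dependent over R. *)
Definition dim_at_most (S : vfield -> Prop) (n : nat) : Prop :=
  forall Q : nat -> vfield, (forall i, (i <= n)%nat -> S (Q i)) ->
  exists c : nat -> R,
    (exists i, (i <= n)%nat /\ c i <> 0) /\
    forall t x u,
      sum_f_R0 (fun i => c i * vtau (Q i) t x u) n = 0 /\
      sum_f_R0 (fun i => c i * vxi (Q i) t x u) n = 0 /\
      sum_f_R0 (fun i => c i * veta (Q i) t x u) n = 0.

(* Main.v *)
Require Import Defs.
From Stdlib Require Import Reals Lra Lia Psatz List Classical.
From Coquelicot Require Import Coquelicot.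
Require Import Defs.
Import ListNotations.
Open Scope R_scope.

Definition icpoly (u a1 a2 a1t a1x a2t a2x
  ta tt tx tu txx txu tuu
  xa xt xx xu xxx xxu xuu
  ea et ex eu exx exu euu ux utx uxx : R) : R :=
  let ut := a2 * uxx + a1 * ux - u * ux in
  let Dt ft fu := ft + ut * fu in
  let Dx fx fu := fx + ux * fu in
  let Dxx fxx fxu fu fuu := fxx + 2 * ux * fxu + uxx * fu + ux ^ 2 * fuu in
  let eta_t := Dt et eu - ut * Dt tt tu - ux * Dt xt xu in
  let eta_x := Dx ex eu - ut * Dx tx tu - ux * Dx xx xu in
  let eta_xx := Dxx exx exu eu euu - ut * Dxx txx txu tu tuu - 2 * utx * Dx tx tu
                - ux * Dxx xxx xxu xu xuu - 2 * uxx * Dx xx xu in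
  eta_t + ea * ux + u * eta_x - (ta * a2t + xa * a2x) * uxx - a2 * eta_xx
  - (ta * a1t + xa * a1x) * ux - a1 * eta_x.

Lemma ic_poly A1 A2 Q : invariance_condition A1 A2 Q ->
  forall t x u ux utx uxx : R,
  icpoly u (A1 t x) (A2 t x) (e1 A1 t x) (e2 A1 t x) (e1 A2 t x) (e2 A2 t x)
   (vtau Q t x u) (d1 (vtau Q) t x u) (d2 (vtau Q) t x u) (d3 (vtau Q) t x u) (d2 (d2 (vtau Q)) t x u) (d2 (d3 (vtau Q)) t x u) (d3 (d3 (vtau Q)) t x u)
   (vxi Q t x u) (d1 (vxi Q) t x u) (d2 (vxi Q) t x u) (d3 (vxi Q) t x u) (d2 (d2 (vxi Q)) t x u) (d2 (d3 (vxi Q)) t x u) (d3 (d3 (vxi Q)) t x u)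
   (veta Q t x u) (d1 (veta Q) t x u) (d2 (veta Q) t x u) (d3 (veta Q) t x u) (d2 (d2 (veta Q)) t x u) (d2 (d3 (veta Q)) t x u) (d3 (d3 (veta Q)) t x u)
   ux utx uxx = 0.
Proof. intros H t x u ux utx uxx. exact (H t x u ux utx uxx). Qed.

Lemma alg1 u a1 a2 a1t a1x a2t a2x ta tt tx tu txx txu tuu xa xt xx xu xxx xxu xuu
  ea et ex eu exx exu euu :
  a2 <> 0 ->
  (forall ux utx uxx, icpoly u a1 a2 a1t a1x a2t a2x ta tt tx tu txx txu tuu
     xa xt xx xu xxx xxu xuu ea et ex eu exx exu euu ux utx uxx = 0) ->
  tx = 0 /\ tu = 0.
Proof.
  intros Ha H.
  pose proof (H 0 1 0) as H1; pose proof (H 0 0 0) as H2;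
  pose proof (H 1 1 0) as H3; pose proof (H 1 0 0) as H4.
  assert (E1 : 2 * a2 * tx = 0).
  { rewrite <- (Rminus_diag_eq _ _ (eq_trans H1 (eq_sym H2))).
    unfold icpoly; ring. }
  assert (E2 : 2 * a2 * (tx + tu) = 0).
  { rewrite <- (Rminus_diag_eq _ _ (eq_trans H3 (eq_sym H4))).
    unfold icpoly; ring. }
  assert (tx = 0).
  { destruct (Rmult_integral _ _ E1) as [h|h]; auto.
    destruct (Rmult_integral _ _ h); lra. }
  subst tx. split; auto.
  destruct (Rmult_integral _ _ E2) as [h|h]; [|lra].
  destruct (Rmult_integral _ _ h); lra.
Qed.

Lemma alg2 u a1 a2 a1t a1x a2t a2x ta tt xa xt xx xu xxx xxu xuu
  ea et ex eu exx exu euu :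
  a2 <> 0 ->
  (forall ux utx uxx, icpoly u a1 a2 a1t a1x a2t a2x ta tt 0 0 0 0 0
     xa xt xx xu xxx xxu xuu ea et ex eu exx exu euu ux utx uxx = 0) ->
  xu = 0 /\ a2 * (2 * xx - tt) - ta * a2t - xa * a2x = 0.
Proof.
  intros Ha H.
  pose proof (H 0 0 1) as H1; pose proof (H 0 0 0) as H2;
  pose proof (H 1 0 1) as H3; pose proof (H 1 0 0) as H4.
  assert (E1 : a2 * (2 * xx - tt) - ta * a2t - xa * a2x = 0).
  { rewrite <- (Rminus_diag_eq _ _ (eq_trans H1 (eq_sym H2))).
    unfold icpoly; ring. }
  assert (E2 : a2 * (2 * xx - tt) - ta * a2t - xa * a2x + 2 * a2 * xu = 0).
  { rewrite <- (Rminus_diag_eq _ _ (eq_trans H3 (eq_sym H4))).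
    unfold icpoly; ring. }
  split; auto.
  assert (E3 : 2 * a2 * xu = 0) by lra.
  destruct (Rmult_integral _ _ E3) as [h|h]; auto.
  destruct (Rmult_integral _ _ h); lra.
Qed.

Lemma alg3 u a1 a2 a1t a1x a2t a2x ta tt xa xt xx xxx
  ea et ex eu exx exu euu :
  a2 <> 0 ->
  (forall ux utx uxx, icpoly u a1 a2 a1t a1x a2t a2x ta tt 0 0 0 0 0
     xa xt xx 0 xxx 0 0 ea et ex eu exx exu euu ux utx uxx = 0) ->
  euu = 0 /\
  (a1 - u) * (eu - tt) - xt + ea + u * (eu - xx) - 2 * a2 * exu + a2 * xxx
    - ta * a1t - xa * a1x - a1 * (eu - xx) = 0 /\
  et + u * ex - a2 * exx - a1 * ex = 0.
Proof.
  intros Ha H.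
  pose proof (H 1 0 0) as H1; pose proof (H (-1) 0 0) as H2;
  pose proof (H 0 0 0) as H3.
  assert (E1 : -2 * a2 * euu = 0).
  { rewrite <- (Rplus_0_r 0), <- Rminus_0_r at 1.
    replace (-2 * a2 * euu) with
     (icpoly u a1 a2 a1t a1x a2t a2x ta tt 0 0 0 0 0 xa xt xx 0 xxx 0 0 ea et ex eu exx exu euu 1 0 0
     + icpoly u a1 a2 a1t a1x a2t a2x ta tt 0 0 0 0 0 xa xt xx 0 xxx 0 0 ea et ex eu exx exu euu (-1) 0 0
     - 2 * icpoly u a1 a2 a1t a1x a2t a2x ta tt 0 0 0 0 0 xa xt xx 0 xxx 0 0 ea et ex eu exx exu euu 0 0 0)
     by (unfold icpoly; ring).
    rewrite H1, H2, H3; ring. }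
  split.
  { destruct (Rmult_integral _ _ E1) as [h|h]; auto.
    destruct (Rmult_integral _ _ h); lra. }
  split.
  { replace ((a1 - u) * (eu - tt) - xt + ea + u * (eu - xx) - 2 * a2 * exu + a2 * xxx
    - ta * a1t - xa * a1x - a1 * (eu - xx)) with
     ((icpoly u a1 a2 a1t a1x a2t a2x ta tt 0 0 0 0 0 xa xt xx 0 xxx 0 0 ea et ex eu exx exu euu 1 0 0
     - icpoly u a1 a2 a1t a1x a2t a2x ta tt 0 0 0 0 0 xa xt xx 0 xxx 0 0 ea et ex eu exx exu euu (-1) 0 0) / 2)
     by (unfold icpoly; field).
    rewrite H1, H2; field. }
  rewrite <- H3. unfold icpoly; ring.
Qed.


Lemma Derive0 (f : R -> R) x : (forall y, f y = 0) -> Derive f x = 0.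
Proof. intros H. rewrite (Derive_ext f (fun _ => 0)); auto. apply Derive_const. Qed.

Lemma linD (f : R -> R) (k : R) : (forall y, ex_derive f y) -> (forall y, Derive f y = k) ->
  forall y, f y = f 0 + k * y.
Proof.
  intros Hd Hk y.
  set (g := fun y => f y - k * y).
  assert (Hg : forall z, is_derive g z 0).
  { intro z. unfold g. auto_derive. apply Hd. rewrite Hk; ring. }
  destruct (MVT_gen g 0 y (fun _ => 0)) as [c [_ Hc]].
  { intros; auto. }
  { intros z _. apply continuity_pt_filterlim. apply (ex_derive_continuous g).
    exists 0; auto. }
  unfold g in Hc. lra.
Qed.

Lemma const0 (f : R -> R) : (forall y, ex_derive f y) -> (forall y, Derive f y = 0) ->
  forall y, f y = f 0.
Proof. intros Hd H y. rewrite (linD f 0 Hd H y). ring. Qed.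

Lemma iterD3_d1 l f : iterD3 l (d1 f) = iterD3 (l ++ [0%nat]) f.
Proof. induction l as [|[|[|a]] l IH]; simpl; try rewrite IH; reflexivity. Qed.
Lemma iterD3_d2 l f : iterD3 l (d2 f) = iterD3 (l ++ [1%nat]) f.
Proof. induction l as [|[|[|a]] l IH]; simpl; try rewrite IH; reflexivity. Qed.
Lemma iterD3_d3 l f : iterD3 l (d3 f) = iterD3 (l ++ [2%nat]) f.
Proof. induction l as [|[|[|a]] l IH]; simpl; try rewrite IH; reflexivity. Qed.

Lemma smooth3_d1 f : smooth3 f -> smooth3 (d1 f).
Proof. intros H l; rewrite iterD3_d1; apply H. Qed.
Lemma smooth3_d2 f : smooth3 f -> smooth3 (d2 f).
Proof. intros H l; rewrite iterD3_d2; apply H. Qed.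
Lemma smooth3_d3 f : smooth3 f -> smooth3 (d3 f).
Proof. intros H l; rewrite iterD3_d3; apply H. Qed.

Lemma s3t f : smooth3 f -> forall t x u, ex_derive (fun s => f s x u) t.
Proof. intros H t x u. exact (proj1 (H nil t x u)). Qed.
Lemma s3x f : smooth3 f -> forall t x u, ex_derive (fun s => f t s u) x.
Proof. intros H t x u. exact (proj1 (proj2 (H nil t x u))). Qed.
Lemma s3u f : smooth3 f -> forall t x u, ex_derive (fun s => f t x s) u.
Proof. intros H t x u. exact (proj1 (proj2 (proj2 (H nil t x u)))). Qed.

Lemma d1_zero f : (forall t x u, f t x u = 0) -> forall t x u, d1 f t x u = 0.
Proof. intros H t x u; unfold d1; apply Derive0; auto. Qed.
Lemma d2_zero f : (forall t x u, f t x u = 0) -> forall t x u, d2 f t x u = 0.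
Proof. intros H t x u; unfold d2; apply Derive0; auto. Qed.
Lemma d3_zero f : (forall t x u, f t x u = 0) -> forall t x u, d3 f t x u = 0.
Proof. intros H t x u; unfold d3; apply Derive0; auto. Qed.

Definition uind (f : R -> R -> R -> R) := forall t x u, f t x u = f t x 0.
Lemma uind_d1 f : uind f -> uind (d1 f).
Proof. intros H t x u; unfold d1; apply Derive_ext; intro; apply H. Qed.
Lemma uind_d2 f : uind f -> uind (d2 f).
Proof. intros H t x u; unfold d2; apply Derive_ext; intro; apply H. Qed.

Lemma zero_u f : smooth3 f -> (forall t x u, d3 f t x u = 0) -> uind f.
Proof. intros Hs H t x u. apply (const0 (fun s => f t x s)); [intro y; apply (s3u f Hs t x y)| intro; apply H]. Qed.
Lemma zero_x f : smooth3 f -> (forall t x u, d2 f t x u = 0) -> forall t x u, f t x u = f t 0 u.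
Proof. intros Hs H t x u. apply (const0 (fun s => f t s u)); [intro y; apply (s3x f Hs t y u)| intro; apply H]. Qed.


Lemma stepT A1 A2 Q : (forall t x, A2 t x <> 0) -> invariance_condition A1 A2 Q ->
  forall t x u, d2 (vtau Q) t x u = 0 /\ d3 (vtau Q) t x u = 0.
Proof.
  intros HA IC t x u. pose proof (ic_poly _ _ _ IC t x u) as H.
  eapply alg1; [apply HA | exact H].
Qed.

Lemma stepX A1 A2 Q : (forall t x, A2 t x <> 0) -> invariance_condition A1 A2 Q ->
  forall t x u, d3 (vxi Q) t x u = 0 /\
   A2 t x * (2 * d2 (vxi Q) t x u - d1 (vtau Q) t x u) - vtau Q t x u * e1 A2 t x
     - vxi Q t x u * e2 A2 t x = 0.
Proof.
  intros HA IC t x u. pose proof (stepT _ _ _ HA IC) as ST.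
  pose proof (ic_poly _ _ _ IC t x u) as H.
  rewrite (d2_zero _ (fun a b c => proj1 (ST a b c))), (d2_zero _ (fun a b c => proj2 (ST a b c))),
    (d3_zero _ (fun a b c => proj2 (ST a b c))), (proj1 (ST t x u)), (proj2 (ST t x u)) in H.
  eapply alg2; [apply HA | exact H].
Qed.

Lemma stepE A1 A2 Q : (forall t x, A2 t x <> 0) -> invariance_condition A1 A2 Q ->
  forall t x u, let f := vtau Q in let g := vxi Q in let h := veta Q in
  d3 (d3 h) t x u = 0 /\
  (A1 t x - u) * (d3 h t x u - d1 f t x u) - d1 g t x u + h t x u
    + u * (d3 h t x u - d2 g t x u) - 2 * A2 t x * d2 (d3 h) t x u + A2 t x * d2 (d2 g) t x u
    - f t x u * e1 A1 t x - g t x u * e2 A1 t x - A1 t x * (d3 h t x u - d2 g t x u) = 0 /\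
  d1 h t x u + u * d2 h t x u - A2 t x * d2 (d2 h) t x u - A1 t x * d2 h t x u = 0.
Proof.
  intros HA IC t x u. pose proof (stepT _ _ _ HA IC) as ST.
  pose proof (stepX _ _ _ HA IC) as SX.
  pose proof (ic_poly _ _ _ IC t x u) as H.
  rewrite (d2_zero _ (fun a b c => proj1 (ST a b c))), (d2_zero _ (fun a b c => proj2 (ST a b c))),
    (d3_zero _ (fun a b c => proj2 (ST a b c))), (proj1 (ST t x u)), (proj2 (ST t x u)) in H.
  rewrite (d2_zero _ (fun a b c => proj1 (SX a b c))), (d3_zero _ (fun a b c => proj1 (SX a b c))),
    (proj1 (SX t x u)) in H.
  eapply alg3; [apply HA | exact H].
Qed.


Lemma d1_aff (a b : R -> R -> R) f : (forall t x u, f t x u = a t x + b t x * u) ->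
  (forall t x, ex_derive (fun s => a s x) t) -> (forall t x, ex_derive (fun s => b s x) t) ->
  forall t x u, d1 f t x u = Derive (fun s => a s x) t + Derive (fun s => b s x) t * u.
Proof.
  intros H Ha Hb t x u. unfold d1.
  rewrite (Derive_ext _ (fun s => a s x + b s x * u)) by (intro; apply H).
  rewrite Derive_plus; auto.
  - rewrite Derive_mult; auto. rewrite Derive_const, Rmult_0_r, Rplus_0_r; reflexivity. apply ex_derive_const.
  - apply ex_derive_mult; auto. apply ex_derive_const.
Qed.

Lemma d2_aff (a b : R -> R -> R) f : (forall t x u, f t x u = a t x + b t x * u) ->
  (forall t x, ex_derive (fun s => a t s) x) -> (forall t x, ex_derive (fun s => b t s) x) ->
  forall t x u, d2 f t x u = Derive (fun s => a t s) x + Derive (fun s => b t s) x * u.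
Proof.
  intros H Ha Hb t x u. unfold d2.
  rewrite (Derive_ext _ (fun s => a t s + b t s * u)) by (intro; apply H).
  rewrite Derive_plus; auto.
  - rewrite Derive_mult; auto. rewrite Derive_const, Rmult_0_r, Rplus_0_r; reflexivity. apply ex_derive_const.
  - apply ex_derive_mult; auto. apply ex_derive_const.
Qed.

Ltac ad := auto_derive; [repeat match goal with |- _ /\ _ => split end; auto | try ring].
Lemma const_deriv (phi : R -> R) k y l : (forall s, phi s = k) -> is_derive phi y l -> l = 0.
Proof. intros H D. rewrite <- (is_derive_unique _ _ _ D).
  rewrite (Derive_ext _ (fun _ => k)) by auto. apply Derive_const. Qed.
Lemma dE3 (F G H : R -> R) (a b c d e k : R) y : ex_derive F y -> ex_derive G y -> ex_derive H y ->
  is_derive (fun s => a + b * s - c * F s + d * G s + (e + k * s) * H s) y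
    (b - c * Derive (fun x => F x) y + d * Derive (fun x => G x) y + k * H y + (e + k*y) * Derive (fun x => H x) y).
Proof. intros. ad. Qed.
Lemma quad_kill (F : R -> R) (k0 k1 m : R) : (forall y, ex_derive F y) -> (forall y, ex_derive (fun x => Derive (fun z => F z) x) y) ->
  (forall y, Derive (fun x => Derive (fun z => F z) x) y <> 0) -> (forall y, k0 + k1*y - F y * m = 0) -> m = 0.
Proof.
  intros H1 H2 H3 H.
  assert (D1 : forall y, k1 - Derive (fun z => F z) y * m = 0).
  { intro y. eapply (const_deriv (fun y => k0 + k1*y - F y * m) 0 y); auto.
    ad. }
  assert (D2 : - Derive (fun x => Derive (fun z => F z) x) 0 * m = 0).
  { eapply (const_deriv (fun y => k1 - Derive (fun z => F z) y * m) 0 0); auto.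
    ad. }
  specialize (H3 0). destruct (Rmult_integral _ _ D2) as [h|h]; auto. lra.
Qed.


Definition sol (A1 A2 : R -> R -> R) (T T1 T2 P P1 : R -> R) (c al : R) : Prop :=
  (forall t, is_derive T t (T1 t)) /\ (forall t, is_derive T1 t (T2 t)) /\
  (forall t, is_derive P t (P1 t)) /\
  (forall t x, A2 t x * (T1 t + 2 * c) = T t * e1 A2 t x + (P t + (T1 t + c) * x) * e2 A2 t x) /\
  (forall t x, T2 t + T1 t * e2 A1 t x + T t * e2 (e1 A1) t x
               + (P t + (T1 t + c) * x) * e2 (e2 A1) t x = 0) /\
  (forall t x, al = P1 t + T2 t * x - c * A1 t x + T t * e1 A1 t x
                    + (P t + (T1 t + c) * x) * e2 A1 t x).

Lemma core A1 A2 (f g h : R -> R -> R -> R) :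
  smooth2 A1 -> (forall t x, e2 (e2 A1) t x <> 0) ->
  smooth3 f -> smooth3 g -> smooth3 h ->
  (forall t x u, d2 f t x u = 0 /\ d3 f t x u = 0) ->
  (forall t x u, d3 g t x u = 0 /\
   A2 t x * (2 * d2 g t x u - d1 f t x u) - f t x u * e1 A2 t x - g t x u * e2 A2 t x = 0) ->
  (forall t x u, d3 (d3 h) t x u = 0 /\
  (A1 t x - u) * (d3 h t x u - d1 f t x u) - d1 g t x u + h t x u
    + u * (d3 h t x u - d2 g t x u) - 2 * A2 t x * d2 (d3 h) t x u + A2 t x * d2 (d2 g) t x u
    - f t x u * e1 A1 t x - g t x u * e2 A1 t x - A1 t x * (d3 h t x u - d2 g t x u) = 0 /\
  d1 h t x u + u * d2 h t x u - A2 t x * d2 (d2 h) t x u - A1 t x * d2 h t x u = 0) ->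
  exists T T1 T2 P P1 c al, sol A1 A2 T T1 T2 P P1 c al /\
   forall t x u, f t x u = T t /\ g t x u = P t + (T1 t + c) * x /\ h t x u = c * u + al.
Proof.
  intros sA1 HA1 sf sg sh ST SX SE.
  pose (T := fun t => f t 0 0).
  assert (fT : forall t x u, f t x u = T t).
  { intros. unfold T. rewrite (zero_x f sf (fun a b c => proj1 (ST a b c)) t x u).
    apply (zero_u f sf (fun a b c => proj2 (ST a b c)) t 0 u). }
  pose (T1 := fun t => Derive T t). pose (T2 := fun t => Derive T1 t).
  assert (fT1 : forall t x u, d1 f t x u = T1 t).
  { intros; unfold d1, T1; apply Derive_ext; intro; apply fT. }
  assert (dT : forall t, is_derive T t (T1 t)).
  { intro; apply Derive_correct; unfold T; apply (s3t f sf). }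
  assert (dT1 : forall t, is_derive T1 t (T2 t)).
  { intro; apply Derive_correct. exact (s3t (d1 f) (smooth3_d1 f sf) t 0 0). }
  assert (exT2 : forall t, ex_derive T2 t).
  { intro; exact (s3t (d1 (d1 f)) (smooth3_d1 _ (smooth3_d1 f sf)) t 0 0). }
  pose proof (zero_u g sg (fun a b c => proj1 (SX a b c))) as gU.
  pose proof (zero_u (d3 h) (smooth3_d3 h sh) (fun a b c => proj1 (SE a b c))) as hU3.
  assert (hrep : forall t x u, h t x u = h t x 0 + d3 h t x 0 * u).
  { intros. rewrite (linD (fun s => h t x s) (d3 h t x 0)); [ring | intro y; apply (s3u h sh t x y) | intro y; apply (hU3 t x y)]. }
  assert (K1 : forall t x, d3 h t x 0 = d2 g t x 0 - T1 t).
  { intros t x.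
    pose proof (proj1 (proj2 (SE t x 0))) as C0; pose proof (proj1 (proj2 (SE t x 1))) as C1.
    rewrite (hU3 t x 1), (fT1 t x 1), (uind_d1 g gU t x 1), (hrep t x 1), (uind_d2 g gU t x 1),
      (uind_d2 (d3 h) hU3 t x 1), (uind_d2 (d2 g) (uind_d2 g gU) t x 1), (fT t x 1), (gU t x 1) in C1.
    rewrite (fT1 t x 0), (fT t x 0) in C0.
    lra. }
  assert (h1 : forall t x u, d1 h t x u = d1 h t x 0 + d1 (d3 h) t x 0 * u).
  { intros. rewrite (d1_aff (fun t x => h t x 0) (fun t x => d3 h t x 0) h hrep
       (fun t x => s3t h sh t x 0) (fun t x => s3t (d3 h) (smooth3_d3 h sh) t x 0) t x u).
    reflexivity. }
  assert (h2 : forall t x u, d2 h t x u = d2 h t x 0 + d2 (d3 h) t x 0 * u).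
  { intros. rewrite (d2_aff (fun t x => h t x 0) (fun t x => d3 h t x 0) h hrep
       (fun t x => s3x h sh t x 0) (fun t x => s3x (d3 h) (smooth3_d3 h sh) t x 0) t x u).
    reflexivity. }
  assert (h22 : forall t x u, d2 (d2 h) t x u = d2 (d2 h) t x 0 + d2 (d2 (d3 h)) t x 0 * u).
  { intros. rewrite (d2_aff (fun t x => d2 h t x 0) (fun t x => d2 (d3 h) t x 0) (d2 h) h2
       (fun t x => s3x (d2 h) (smooth3_d2 h sh) t x 0)
       (fun t x => s3x (d2 (d3 h)) (smooth3_d2 _ (smooth3_d3 h sh)) t x 0) t x u).
    reflexivity. }
  assert (C0s : forall t x, d2 (d3 h) t x 0 = 0 /\
     d1 (d3 h) t x 0 + d2 h t x 0 - A2 t x * d2 (d2 (d3 h)) t x 0 - A1 t x * d2 (d3 h) t x 0 = 0 /\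
     d1 h t x 0 - A2 t x * d2 (d2 h) t x 0 - A1 t x * d2 h t x 0 = 0).
  { intros t x.
    pose proof (proj2 (proj2 (SE t x 0))) as C0; pose proof (proj2 (proj2 (SE t x 1))) as C1;
    pose proof (proj2 (proj2 (SE t x (-1)))) as C2.
    rewrite h1, h2, h22 in C1. rewrite h1, h2, h22 in C2.
    rewrite (h1 t x 0), (h2 t x 0), (h22 t x 0) in C0.
    repeat split; lra. }

  assert (gxx : forall t x, d2 (d2 g) t x 0 = 0).
  { intros t x. assert (E : d2 (d3 h) t x 0 = d2 (d2 g) t x 0).
    { change (d2 (d3 h) t x 0) with (Derive (fun s => d3 h t s 0) x).
      rewrite (Derive_ext _ (fun s => d2 g t s 0 - T1 t)) by (intro; apply K1).
      rewrite Derive_minus; [rewrite Derive_const, Rminus_0_r; reflexivity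
        | apply (s3x (d2 g) (smooth3_d2 g sg)) | apply ex_derive_const]. }
    rewrite <- E; apply (proj1 (C0s t x)). }
  pose (Qf := fun t => d2 g t 0 0).
  assert (gx : forall t x, d2 g t x 0 = Qf t).
  { intros t x. unfold Qf.
    apply (const0 (fun s => d2 g t s 0)); [intro y; apply (s3x (d2 g) (smooth3_d2 g sg)) | intro y; apply gxx]. }
  pose (P := fun t => g t 0 0).
  assert (grep0 : forall t x, g t x 0 = P t + Qf t * x).
  { intros t x. unfold P.
    apply (linD (fun s => g t s 0) (Qf t)); [intro y; apply (s3x g sg) | intro y; apply gx]. }
  pose (P1 := fun t => Derive P t). pose (Qf1 := fun t => Derive Qf t).
  assert (dP : forall t, is_derive P t (P1 t)).
  { intro; apply Derive_correct; unfold P; apply (s3t g sg). }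
  assert (exQf : forall t, ex_derive Qf t).
  { intro t; exact (s3t (d2 g) (smooth3_d2 g sg) t 0 0). }
  assert (exQf1 : forall t, ex_derive Qf1 t).
  { intro t; exact (s3t (d1 (d2 g)) (smooth3_d1 _ (smooth3_d2 g sg)) t 0 0). }
  assert (exT1 : forall t, ex_derive T1 t).
  { intro t; exists (T2 t); apply dT1. }
  assert (gt : forall t x, d1 g t x 0 = P1 t + Qf1 t * x).
  { intros t x. change (d1 g t x 0) with (Derive (fun s => g s x 0) t).
    rewrite (Derive_ext _ (fun s => P s + Qf s * x)) by (intro; apply grep0).
    rewrite Derive_plus; [| exists (P1 t); apply dP | apply ex_derive_mult; [apply exQf | apply ex_derive_const]].
    rewrite Derive_mult; [| apply exQf | apply ex_derive_const]. rewrite Derive_const.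
    unfold P1, Qf1; rewrite Rmult_0_r, Rplus_0_r; reflexivity. }

  assert (K1' : forall t x, d3 h t x 0 = Qf t - T1 t).
  { intros; rewrite K1, gx; reflexivity. }
  assert (Bt : forall t x, d1 (d3 h) t x 0 = Qf1 t - T2 t).
  { intros t x. change (d1 (d3 h) t x 0) with (Derive (fun s => d3 h s x 0) t).
    rewrite (Derive_ext _ (fun s => Qf s - T1 s)) by (intro; apply K1').
    rewrite Derive_minus; [| apply exQf | apply exT1].
    unfold Qf1. rewrite (is_derive_unique _ _ _ (dT1 t)). reflexivity. }
  assert (d22d3 : forall t x, d2 (d2 (d3 h)) t x 0 = 0).
  { intros t x. change (d2 (d2 (d3 h)) t x 0) with (Derive (fun s => d2 (d3 h) t s 0) x).
    apply Derive0. intro; apply C0s. }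
  assert (hx : forall t x, d2 h t x 0 = T2 t - Qf1 t).
  { intros t x. pose proof (proj1 (proj2 (C0s t x))) as C.
    rewrite Bt, d22d3, (proj1 (C0s t x)) in C. lra. }
  pose (gam := fun t => T2 t - Qf1 t). pose (al0 := fun t => h t 0 0).
  assert (hrep0 : forall t x, h t x 0 = al0 t + gam t * x).
  { intros t x. unfold al0.
    apply (linD (fun s => h t s 0) (gam t)); [intro y; apply (s3x h sh) | intro y; apply hx]. }
  assert (hxx : forall t x, d2 (d2 h) t x 0 = 0).
  { intros t x. change (d2 (d2 h) t x 0) with (Derive (fun s => d2 h t s 0) x).
    rewrite (Derive_ext _ (fun _ => gam t)) by (intro; apply hx). apply Derive_const. }
  assert (exgam : forall t, ex_derive gam t).
  { intro t. unfold gam. auto_derive. repeat split; [apply exT2 | apply exQf1]. }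
  assert (exal0 : forall t, ex_derive al0 t).
  { intro t. exact (s3t h sh t 0 0). }
  assert (ht : forall t x, d1 h t x 0 = Derive al0 t + Derive gam t * x).
  { intros t x. change (d1 h t x 0) with (Derive (fun s => h s x 0) t).
    rewrite (Derive_ext _ (fun s => al0 s + gam s * x)) by (intro; apply hrep0).
    rewrite Derive_plus; [| apply exal0 | apply ex_derive_mult; [apply exgam | apply ex_derive_const]].
    rewrite Derive_mult; [| apply exgam | apply ex_derive_const]. rewrite Derive_const.
    rewrite Rmult_0_r, Rplus_0_r; reflexivity. }
  assert (iv : forall t x, Derive al0 t + Derive gam t * x - A1 t x * gam t = 0).
  { intros t x. pose proof (proj2 (proj2 (C0s t x))) as C.
    rewrite ht, hxx, hx in C. change (T2 t - Qf1 t) with (gam t) in C. lra. }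
  assert (gam0 : forall t, gam t = 0).
  { intro t. apply (quad_kill (A1 t) (Derive al0 t) (Derive gam t) (gam t)).
    - intro y. exact (proj1 (proj2 (sA1 nil t y))).
    - intro y. exact (proj1 (proj2 (sA1 [false] t y))).
    - intro y. exact (HA1 t y).
    - intro y. apply iv. }
  assert (T2Q : forall t, T2 t = Qf1 t).
  { intro t. pose proof (gam0 t) as G. unfold gam in G. lra. }
  assert (cst : forall t, Qf t - T1 t = Qf 0 - T1 0).
  { apply (const0 (fun t => Qf t - T1 t)).
    - intro y. auto_derive. repeat split; [apply exQf | apply exT1].
    - intro y. rewrite Derive_minus; [| apply exQf | apply exT1].
      rewrite (is_derive_unique _ _ _ (dT1 y)). rewrite T2Q. unfold Qf1. ring. }
  set (c := Qf 0 - T1 0) in *.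
  assert (Qfc : forall t, Qf t = T1 t + c).
  { intro t. pose proof (cst t). lra. }
  assert (al0d : forall t, Derive al0 t = 0).
  { intro t. pose proof (iv t 0) as I. rewrite gam0 in I. lra. }
  assert (al0c : forall t, al0 t = al0 0).
  { apply const0; [apply exal0 | apply al0d]. }
  set (al := al0 0) in *.
  assert (E3 : forall t x, al = P1 t + T2 t * x - c * A1 t x + T t * e1 A1 t x
                    + (P t + (T1 t + c) * x) * e2 A1 t x).
  { intros t x. pose proof (proj1 (proj2 (SE t x 0))) as C.
    rewrite K1', fT1, gt, hrep0, gam0, al0c, gxx, (proj1 (C0s t x)), fT, grep0, gx, <- T2Q, Qfc in C.
    lra. }
  exists T, T1, T2, P, P1, c, al. split.
  - split; [exact dT|]. split; [exact dT1|]. split; [exact dP|]. split.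
    + intros t x. pose proof (proj2 (SX t x 0)) as C.
      rewrite gx, fT1, fT, grep0, Qfc in C. lra.
    + split; [| exact E3].
      intros t x.
      pose proof (const_deriv _ al x _ (fun s => eq_sym (E3 t s))
        (dE3 (A1 t) (e1 A1 t) (e2 A1 t) (P1 t) (T2 t) c (T t) (P t) (T1 t + c) x
          (proj1 (proj2 (sA1 nil t x))) (proj1 (proj2 (sA1 [true] t x)))
          (proj1 (proj2 (sA1 [false] t x))))) as D.
      change (Derive (fun x0 => A1 t x0) x) with (e2 A1 t x) in D.
      change (Derive (fun x0 => e1 A1 t x0) x) with (e2 (e1 A1) t x) in D.
      change (Derive (fun x0 => e2 A1 t x0) x) with (e2 (e2 A1) t x) in D.
      lra.
  - intros t x u. split; [apply fT|]. split.
    + rewrite gU, grep0, Qfc. ring.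
    + rewrite hrep, hrep0, gam0, al0c, K1', Qfc. unfold al. ring.
Qed.

Lemma part1 A1 A2 Q : in_class_L1hat A1 A2 -> lie_symmetry A1 A2 Q ->
  exists T T1 T2 P P1 c al, sol A1 A2 T T1 T2 P P1 c al /\
   forall t x u, vtau Q t x u = T t /\ vxi Q t x u = P t + (T1 t + c) * x /\ veta Q t x u = c * u + al.
Proof.
  intros [sA1 [sA2 [HA2 HA1]]] [sf [sg [sh IC]]].
  apply (core A1 A2 (vtau Q) (vxi Q) (veta Q) sA1 HA1 sf sg sh).
  - exact (stepT _ _ _ HA2 IC).
  - exact (stepX _ _ _ HA2 IC).
  - exact (stepE _ _ _ HA2 IC).
Qed.


Lemma sq_bound y1 y2 y3 d1 d2 d3 m :
  Rabs d1 + Rabs d2 + Rabs d3 <= m * (Rabs y1 + Rabs y2 + Rabs y3) ->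
  Rabs (2 * (y1 * d1 + y2 * d2 + y3 * d3)) <= 6 * m * (y1 * y1 + y2 * y2 + y3 * y3).
Proof.
  intros H.
  set (S := Rabs y1 + Rabs y2 + Rabs y3). set (D := Rabs d1 + Rabs d2 + Rabs d3).
  assert (HS : 0 <= S) by (unfold S; pose proof (Rabs_pos y1); pose proof (Rabs_pos y2); pose proof (Rabs_pos y3); lra).
  assert (HD : 0 <= D) by (unfold D; pose proof (Rabs_pos d1); pose proof (Rabs_pos d2); pose proof (Rabs_pos d3); lra).
  assert (H1 : Rabs (2 * (y1 * d1 + y2 * d2 + y3 * d3)) <= 2 * (S * D)).
  { rewrite Rabs_mult, Rabs_pos_eq by lra.
    apply Rmult_le_compat_l; [lra|].
    eapply Rle_trans; [apply Rabs_triang|].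
    eapply Rle_trans; [apply Rplus_le_compat_r; apply Rabs_triang|].
    rewrite !Rabs_mult. unfold S, D.
    pose proof (Rabs_pos y1); pose proof (Rabs_pos y2); pose proof (Rabs_pos y3);
    pose proof (Rabs_pos d1); pose proof (Rabs_pos d2); pose proof (Rabs_pos d3). nra. }
  assert (H2 : S * S <= 3 * (y1 * y1 + y2 * y2 + y3 * y3)).
  { unfold S.
    pose proof (Rabs_pos y1); pose proof (Rabs_pos y2); pose proof (Rabs_pos y3).
    assert (Rabs y1 * Rabs y1 = y1 * y1) by (rewrite <- Rabs_mult; apply Rabs_pos_eq; nra).
    assert (Rabs y2 * Rabs y2 = y2 * y2) by (rewrite <- Rabs_mult; apply Rabs_pos_eq; nra).
    assert (Rabs y3 * Rabs y3 = y3 * y3) by (rewrite <- Rabs_mult; apply Rabs_pos_eq; nra).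
    pose proof (Rle_0_sqr (Rabs y1 - Rabs y2)); pose proof (Rle_0_sqr (Rabs y1 - Rabs y3));
    pose proof (Rle_0_sqr (Rabs y3 - Rabs y2)). unfold Rsqr in *. nra. }
  destruct (Req_dec S 0) as [S0|S0].
  - assert (y1 = 0 /\ y2 = 0 /\ y3 = 0) as [-> [-> ->]].
    { unfold S in S0. pose proof (Rabs_pos y1); pose proof (Rabs_pos y2); pose proof (Rabs_pos y3).
      repeat split; apply Rabs_eq_0; lra. }
    rewrite !Rmult_0_l, !Rplus_0_l, Rmult_0_r, Rabs_R0. lra.
  - assert (Hm : 0 <= m).
    { destruct (Rle_dec 0 m); auto. exfalso. fold S D in H. nra. }
    fold S D in H. nra.
Qed.

Lemma dphi (N : R -> R) dN k t0 t : is_derive N t dN ->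
  is_derive (fun s => N s * exp (k * (s - t0))) t ((dN + k * N t) * exp (k * (t - t0))).
Proof.
  intros H. pose proof (is_derive_unique _ _ _ H) as U.
  auto_derive.
  - exists dN; exact H.
  - change (Derive (fun x => N x) t) with (Derive N t). rewrite U. unfold Rminus. ring.
Qed.

Lemma dN3 (y1 y2 y3 : R -> R) d1 d2 d3 t : is_derive y1 t d1 -> is_derive y2 t d2 -> is_derive y3 t d3 ->
  is_derive (fun s => y1 s * y1 s + y2 s * y2 s + y3 s * y3 s) t (2 * (y1 t * d1 + y2 t * d2 + y3 t * d3)).
Proof.
  intros H1 H2 H3.
  pose proof (is_derive_unique _ _ _ H1) as U1; pose proof (is_derive_unique _ _ _ H2) as U2;
  pose proof (is_derive_unique _ _ _ H3) as U3.
  auto_derive.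
  - repeat split; first [exists d1; exact H1 | exists d2; exact H2 | exists d3; exact H3].
  - change (Derive (fun x => y1 x) t) with (Derive y1 t).
    change (Derive (fun x => y2 x) t) with (Derive y2 t).
    change (Derive (fun x => y3 x) t) with (Derive y3 t).
    rewrite U1, U2, U3. ring.
Qed.

Lemma ode_unique (y1 y2 y3 d1 d2 d3 M : R -> R) t0 :
  (forall t, is_derive y1 t (d1 t)) -> (forall t, is_derive y2 t (d2 t)) ->
  (forall t, is_derive y3 t (d3 t)) ->
  (forall t, Rabs (d1 t) + Rabs (d2 t) + Rabs (d3 t) <= M t * (Rabs (y1 t) + Rabs (y2 t) + Rabs (y3 t))) ->
  (forall t, continuity_pt M t) -> y1 t0 = 0 -> y2 t0 = 0 -> y3 t0 = 0 ->
  forall t, y1 t = 0 /\ y2 t = 0 /\ y3 t = 0.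
Proof.
  intros D1 D2 D3 HB HM Z1 Z2 Z3 t1.
  pose (N := fun s => y1 s * y1 s + y2 s * y2 s + y3 s * y3 s).
  pose (dN := fun s => 2 * (y1 s * d1 s + y2 s * d2 s + y3 s * d3 s)).
  assert (HdN : forall s, is_derive N s (dN s)) by (intro s; apply dN3; auto).
  assert (Npos : forall s, 0 <= N s) by (intro s; unfold N; nra).
  assert (N0 : N t0 = 0) by (unfold N; rewrite Z1, Z2, Z3; ring).
  assert (HNb : forall s, Rabs (dN s) <= 6 * M s * N s) by (intro s; apply sq_bound; apply HB).
  destruct (continuity_ab_maj M (Rmin t0 t1) (Rmax t0 t1)) as [Mx [HMx _]].
  { apply Rmin_Rmax. }
  { intros; apply HM. }
  set (K := Rabs (M Mx)).
  assert (HK : forall s, Rmin t0 t1 <= s <= Rmax t0 t1 -> Rabs (dN s) <= 6 * K * N s).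
  { intros s Hs. eapply Rle_trans; [apply HNb|].
    pose proof (HMx s Hs). pose proof (Rle_abs (M Mx)). pose proof (Npos s). unfold K. nra. }
  assert (NT : N t1 = 0).
  { destruct (Rle_dec t0 t1) as [Hle|Hlt].
    - pose (k := - (6 * K)).
      destruct (MVT_gen (fun s => N s * exp (k * (s - t0))) t0 t1
                 (fun s => (dN s + k * N s) * exp (k * (s - t0)))) as [c [Hc Hmvt]].
      { intros; apply dphi; auto. }
      { intros s _. apply continuity_pt_filterlim.
        apply (ex_derive_continuous (fun s => N s * exp (k * (s - t0)))).
        eexists; apply dphi; auto. }
      simpl in Hmvt. rewrite N0, Rmult_0_l in Hmvt.
      assert (E : (dN c + k * N c) <= 0).
      { pose proof (HK c Hc) as B. pose proof (Rle_abs (dN c)). unfold k. lra. }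
      pose proof (exp_pos (k * (c - t0))). pose proof (exp_pos (k * (t1 - t0))).
      assert (X : (dN c + k * N c) * exp (k * (c - t0)) <= 0) by nra.
      assert (X2 : (dN c + k * N c) * exp (k * (c - t0)) * (t1 - t0) <= 0) by nra.
      assert (N t1 * exp (k * (t1 - t0)) <= 0) by lra.
      pose proof (Npos t1). apply Rle_antisym; [|lra].
      apply (Rmult_le_reg_r (exp (k * (t1 - t0)))); lra.
    - pose (k := 6 * K).
      destruct (MVT_gen (fun s => N s * exp (k * (s - t0))) t0 t1
                 (fun s => (dN s + k * N s) * exp (k * (s - t0)))) as [c [Hc Hmvt]].
      { intros; apply dphi; auto. }
      { intros s _. apply continuity_pt_filterlim.
        apply (ex_derive_continuous (fun s => N s * exp (k * (s - t0)))).
        eexists; apply dphi; auto. }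
      simpl in Hmvt. rewrite N0, Rmult_0_l in Hmvt.
      assert (E : 0 <= (dN c + k * N c)).
      { pose proof (HK c Hc) as B. pose proof (Rle_abs (- dN c)). rewrite Rabs_Ropp in *. unfold k. lra. }
      pose proof (exp_pos (k * (c - t0))). pose proof (exp_pos (k * (t1 - t0))).
      assert (X : 0 <= (dN c + k * N c) * exp (k * (c - t0))) by nra.
      assert (X2 : (dN c + k * N c) * exp (k * (c - t0)) * (t1 - t0) <= 0) by nra.
      assert (N t1 * exp (k * (t1 - t0)) <= 0) by lra.
      pose proof (Npos t1). apply Rle_antisym; [|lra].
      apply (Rmult_le_reg_r (exp (k * (t1 - t0)))); lra. }
  unfold N in NT. repeat split; nra.
Qed.


Lemma cont_sum (f g : R -> R) x : continuity_pt f x -> continuity_pt g x -> continuity_pt (fun t => f t + g t) x.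
Proof. intros. exact (continuity_pt_plus f g x H H0). Qed.
Lemma cont_abs (f : R -> R) x : continuity_pt f x -> continuity_pt (fun t => Rabs (f t)) x.
Proof. intros H. apply continuity_pt_filterlim. apply (continuous_Rabs_comp f). apply continuity_pt_filterlim. exact H. Qed.
Lemma cont_der (f : R -> R) x : ex_derive f x -> continuity_pt f x.
Proof. intros H. apply continuity_pt_filterlim. apply (ex_derive_continuous f). exact H. Qed.

Lemma dE2 (F G H : R -> R) (a b d e k : R) y : ex_derive F y -> ex_derive G y -> ex_derive H y ->
  is_derive (fun s => a + b * F s + d * G s + (e + k * s) * H s) y
    (b * Derive (fun x => F x) y + d * Derive (fun x => G x) y + k * H y + (e + k*y) * Derive (fun x => H x) y).
Proof. intros. ad. Qed.

Lemma dprod0 (F G : R -> R) dF t : is_derive F t dF -> F t = 0 -> ex_derive G t ->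
  is_derive (fun s => F s * G s) t (dF * G t).
Proof.
  intros H Z [dG HG].
  pose proof (is_derive_unique _ _ _ H) as U. pose proof (is_derive_unique _ _ _ HG) as V.
  auto_derive.
  - split; [exists dF; exact H | split; [exists dG; exact HG | exact I]].
  - change (Derive (fun x => F x) t) with (Derive F t).
    change (Derive (fun x => G x) t) with (Derive G t). rewrite U, Z. ring.
Qed.

Lemma dsum4 (F1 G1 F2 G2 F3 G3 F4 G4 : R -> R) d1 d2 d3 d4 t :
  is_derive F1 t d1 -> F1 t = 0 -> ex_derive G1 t ->
  is_derive F2 t d2 -> F2 t = 0 -> ex_derive G2 t ->
  is_derive F3 t d3 -> F3 t = 0 -> ex_derive G3 t ->
  is_derive F4 t d4 -> F4 t = 0 -> ex_derive G4 t ->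
  is_derive (fun s => F1 s * G1 s + F2 s * G2 s + F3 s * G3 s + F4 s * G4 s) t
    (d1 * G1 t + d2 * G2 t + d3 * G3 t + d4 * G4 t).
Proof.
  intros HF1 Z1 [e1 HG1] HF2 Z2 [e2 HG2] HF3 Z3 [e3 HG3] HF4 Z4 [e4 HG4].
  pose proof (is_derive_unique _ _ _ HF1) as U1; pose proof (is_derive_unique _ _ _ HF2) as U2;
  pose proof (is_derive_unique _ _ _ HF3) as U3; pose proof (is_derive_unique _ _ _ HF4) as U4.
  auto_derive.
  - repeat split; first [exists d1; exact HF1 | exists d2; exact HF2 | exists d3; exact HF3
      | exists d4; exact HF4 | exists e1; exact HG1 | exists e2; exact HG2 | exists e3; exact HG3
      | exists e4; exact HG4].
  - change (Derive (fun x => F1 x) t) with (Derive F1 t).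
    change (Derive (fun x => F2 x) t) with (Derive F2 t).
    change (Derive (fun x => F3 x) t) with (Derive F3 t).
    change (Derive (fun x => F4 x) t) with (Derive F4 t).
    rewrite U1, U2, U3, U4, Z1, Z2, Z3, Z4. ring.
Qed.

Lemma isd_aff (f g : R -> R) df dg a b t : is_derive f t df -> is_derive g t dg ->
  is_derive (fun s => a * f s + b * g s) t (a * df + b * dg).
Proof.
  intros H G. pose proof (is_derive_unique _ _ _ H) as U. pose proof (is_derive_unique _ _ _ G) as V.
  auto_derive.
  - split; [exists df; exact H | split; [exists dg; exact G | exact I]].
  - change (Derive (fun x => f x) t) with (Derive f t).
    change (Derive (fun x => g x) t) with (Derive g t). rewrite U, V. ring.
Qed.


Ltac exdt sA := match goal with |- ex_derive (fun s => _) ?t =>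
  match goal with |- context [?F _ ?x] =>
  first [exact (proj1 (sA [] t x)) | exact (proj1 (sA [true] t x)) | exact (proj1 (sA [false] t x))
        | exact (proj1 (sA [false;true] t x)) | exact (proj1 (sA [false;false] t x))] end end.

Lemma zero_nondeg A1 A2 T T1 T2 P P1 c al t0 :
  in_class_L1hat A1 A2 -> sol A1 A2 T T1 T2 P P1 c al ->
  ((exists x, e2 A2 t0 x <> 0) \/ (exists x1 x2, e2 (e2 A1) t0 x1 <> e2 (e2 A1) t0 x2)) ->
  T t0 = 0 -> c = 0 -> al = 0 /\ T1 t0 = 0 /\ P t0 = 0.
Proof.
  intros [sA1 [sA2 [HA2 HA1]]] [dT [dT1 [dP [E1 [E2 E3]]]]] ND HT Hc. subst c.
  assert (HT1 : T1 t0 = 0).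
  { destruct (Req_dec (T1 t0) 0) as [HT1|HT1]; auto. exfalso.
    pose (x0 := - P t0 / T1 t0).
    pose proof (const_deriv _ 0 x0 _ (fun s => E2 t0 s)
      (dE2 (e2 A1 t0) (e2 (e1 A1) t0) (e2 (e2 A1) t0) (T2 t0) (T1 t0) (T t0) (P t0) (T1 t0 + 0) x0
        (proj1 (proj2 (sA1 [false] t0 x0))) (proj1 (proj2 (sA1 [false;true] t0 x0)))
        (proj1 (proj2 (sA1 [false;false] t0 x0))))) as D.
    change (Derive (fun x => e2 A1 t0 x) x0) with (e2 (e2 A1) t0 x0) in D.
    assert (Z : P t0 + (T1 t0 + 0) * x0 = 0) by (unfold x0; field; auto).
    rewrite Z, HT in D.
    assert (W : T1 t0 * e2 (e2 A1) t0 x0 = 0) by lra.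
    destruct (Rmult_integral _ _ W) as [W1|W1]; [exact (HT1 W1) | exact (HA1 t0 x0 W1)]. }
  assert (HP : P t0 = 0).
  { destruct ND as [[x Hx]|[x1 [x2 Hx]]].
    - pose proof (E1 t0 x) as e. rewrite HT, HT1 in e.
      assert (W : P t0 * e2 A2 t0 x = 0) by lra.
      destruct (Rmult_integral _ _ W) as [W1|W1]; [exact W1 | contradiction].
    - pose proof (E2 t0 x1) as e1; pose proof (E2 t0 x2) as e2'. rewrite HT, HT1 in e1, e2'.
      assert (W : P t0 * (e2 (e2 A1) t0 x1 - e2 (e2 A1) t0 x2) = 0) by lra.
      destruct (Rmult_integral _ _ W) as [W1|W1]; [exact W1 | exfalso; apply Hx; lra]. }
  assert (HT2 : T2 t0 = 0).
  { pose proof (E2 t0 0) as e. rewrite HT, HT1, HP in e. lra. }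
  assert (HP1 : al = P1 t0).
  { pose proof (E3 t0 0) as e. rewrite HT, HT1, HP, HT2 in e. lra. }
  split; [|split; auto].
  rewrite HP1.
  destruct ND as [[x Hx]|[x1 [x2 Hx]]].
  - pose proof (const_deriv
      (fun s => T1 s * A2 s x + T s * (- e1 A2 s x) + P s * (- e2 A2 s x) + T1 s * (- x * e2 A2 s x)) 0 t0 _
      (fun s => ltac:(pose proof (E1 s x); lra))
      (dsum4 T1 (fun s => A2 s x) T (fun s => - e1 A2 s x) P (fun s => - e2 A2 s x)
         T1 (fun s => - x * e2 A2 s x) (T2 t0) (T1 t0) (P1 t0) (T2 t0) t0
         (dT1 t0) HT1 ltac:(exdt sA2) (dT t0) HT ltac:(auto_derive; exdt sA2)
         (dP t0) HP ltac:(auto_derive; exdt sA2) (dT1 t0) HT1 ltac:(auto_derive; exdt sA2))) as D.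
    simpl in D. rewrite HT1, HT2 in D.
    assert (W : P1 t0 * e2 A2 t0 x = 0) by lra.
    destruct (Rmult_integral _ _ W) as [W1|W1]; [exact W1 | contradiction].
  - pose proof (const_deriv
      (fun s => T1 s * (e2 A1 s x1 - e2 A1 s x2) + T s * (e2 (e1 A1) s x1 - e2 (e1 A1) s x2)
         + P s * (e2 (e2 A1) s x1 - e2 (e2 A1) s x2)
         + T1 s * (x1 * e2 (e2 A1) s x1 - x2 * e2 (e2 A1) s x2)) 0 t0 _
      (fun s => ltac:(pose proof (E2 s x1); pose proof (E2 s x2); lra))
      (dsum4 T1 (fun s => e2 A1 s x1 - e2 A1 s x2) T (fun s => e2 (e1 A1) s x1 - e2 (e1 A1) s x2)
         P (fun s => e2 (e2 A1) s x1 - e2 (e2 A1) s x2)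
         T1 (fun s => x1 * e2 (e2 A1) s x1 - x2 * e2 (e2 A1) s x2) (T2 t0) (T1 t0) (P1 t0) (T2 t0) t0
         (dT1 t0) HT1 ltac:(auto_derive; split; [exdt sA1|split; [exdt sA1|exact I]])
         (dT t0) HT ltac:(auto_derive; split; [exdt sA1|split; [exdt sA1|exact I]])
         (dP t0) HP ltac:(auto_derive; split; [exdt sA1|split; [exdt sA1|exact I]])
         (dT1 t0) HT1 ltac:(auto_derive; split; [exdt sA1|split; [exdt sA1|exact I]]))) as D.
    simpl in D. rewrite HT1, HT2 in D.
    assert (W : P1 t0 * (e2 (e2 A1) t0 x1 - e2 (e2 A1) t0 x2) = 0) by lra.
    destruct (Rmult_integral _ _ W) as [W1|W1]; [exact W1 | exfalso; apply Hx; lra].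
Qed.

Lemma zero_deg A1 A2 T T1 T2 P P1 c al t0 :
  in_class_L1hat A1 A2 -> sol A1 A2 T T1 T2 P P1 c al ->
  (forall t x, e2 A2 t x = 0) -> (forall t x1 x2, e2 (e2 A1) t x1 = e2 (e2 A1) t x2) ->
  T t0 = 0 -> al = 0 -> c = 0 /\ T1 t0 = 0 /\ P t0 = 0.
Proof.
  intros [sA1 [sA2 [HA2 HA1]]] [dT [dT1 [dP [E1 [E2 E3]]]]] D2 D1 HT Hal.
  assert (R1 : T1 t0 + 2 * c = 0).
  { pose proof (E1 t0 0) as e. rewrite HT, (D2 t0 0) in e.
    assert (W : A2 t0 0 * (T1 t0 + 2 * c) = 0) by lra.
    destruct (Rmult_integral _ _ W) as [W1|W1]; [exfalso; exact (HA2 _ _ W1) | exact W1]. }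
  assert (R2 : 2 * T1 t0 + c = 0).
  { pose proof (const_deriv _ 0 0 _ (fun s => E2 t0 s)
      (dE2 (e2 A1 t0) (e2 (e1 A1) t0) (e2 (e2 A1) t0) (T2 t0) (T1 t0) (T t0) (P t0) (T1 t0 + c) 0
        (proj1 (proj2 (sA1 [false] t0 0))) (proj1 (proj2 (sA1 [false;true] t0 0)))
        (proj1 (proj2 (sA1 [false;false] t0 0))))) as D.
    change (Derive (fun x => e2 A1 t0 x) 0) with (e2 (e2 A1) t0 0) in D.
    rewrite (Derive_ext (fun x => e2 (e2 A1) t0 x) (fun _ => e2 (e2 A1) t0 0)) in D
      by (intro; apply D1).
    rewrite Derive_const, HT in D.
    assert (W : (2 * T1 t0 + c) * e2 (e2 A1) t0 0 = 0) by lra.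
    destruct (Rmult_integral _ _ W) as [W1|W1]; [exact W1 | exfalso; exact (HA1 _ _ W1)]. }
  assert (Hc : c = 0) by lra.
  assert (HT1 : T1 t0 = 0) by lra.
  subst c.
  assert (HT2 : T2 t0 = 0).
  { pose proof (const_deriv
      (fun s => T1 s * A2 s 0 + T s * (- e1 A2 s 0) + T s * 0 + T s * 0) 0 t0 _
      (fun s => ltac:(pose proof (E1 s 0); rewrite (D2 s 0) in *; lra))
      (dsum4 T1 (fun s => A2 s 0) T (fun s => - e1 A2 s 0) T (fun _ => 0)
         T (fun _ => 0) (T2 t0) (T1 t0) (T1 t0) (T1 t0) t0
         (dT1 t0) HT1 ltac:(exdt sA2) (dT t0) HT ltac:(auto_derive; exdt sA2)
         (dT t0) HT (ex_derive_const _ _) (dT t0) HT (ex_derive_const _ _))) as D.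
    simpl in D. rewrite HT1 in D.
    assert (W : T2 t0 * A2 t0 0 = 0) by lra.
    destruct (Rmult_integral _ _ W) as [W1|W1]; [exact W1 | exfalso; exact (HA2 _ _ W1)]. }
  split; auto. split; auto.
  pose proof (E2 t0 0) as e. rewrite HT, HT1, HT2 in e.
  assert (W : P t0 * e2 (e2 A1) t0 0 = 0) by lra.
  destruct (Rmult_integral _ _ W) as [W1|W1]; [exact W1 | exfalso; exact (HA1 _ _ W1)].
Qed.


Lemma abs3 x y z : Rabs (x + y + z) <= Rabs x + Rabs y + Rabs z.
Proof. eapply Rle_trans; [apply Rabs_triang|]. pose proof (Rabs_triang x y). lra. Qed.

Lemma sol_zero A1 A2 T T1 T2 P P1 t0 :
  in_class_L1hat A1 A2 -> sol A1 A2 T T1 T2 P P1 0 0 ->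
  T t0 = 0 -> T1 t0 = 0 -> P t0 = 0 -> forall t, T t = 0 /\ T1 t = 0 /\ P t = 0.
Proof.
  intros [sA1 [sA2 [HA2 HA1]]] [dT [dT1 [dP [E1 [E2 E3]]]]] Z1 Z2 Z3.
  apply (ode_unique T T1 P T1 T2 P1
    (fun t => 1 + Rabs (e2 A1 t 0) + Rabs (e2 (e1 A1) t 0) + Rabs (e2 (e2 A1) t 0) + Rabs (e1 A1 t 0))
    t0); auto.
  - intro t.
    assert (HT2 : T2 t = - (T1 t * e2 A1 t 0 + T t * e2 (e1 A1) t 0 + P t * e2 (e2 A1) t 0)).
    { pose proof (E2 t 0). lra. }
    assert (HP1 : P1 t = - (T t * e1 A1 t 0 + P t * e2 A1 t 0)).
    { pose proof (E3 t 0). lra. }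
    rewrite HT2, HP1, !Rabs_Ropp.
    pose proof (abs3 (T1 t * e2 A1 t 0) (T t * e2 (e1 A1) t 0) (P t * e2 (e2 A1) t 0)) as B1.
    pose proof (Rabs_triang (T t * e1 A1 t 0) (P t * e2 A1 t 0)) as B2.
    rewrite !Rabs_mult in B1. rewrite !Rabs_mult in B2.
    pose proof (Rabs_pos (T t)); pose proof (Rabs_pos (T1 t)); pose proof (Rabs_pos (P t));
    pose proof (Rabs_pos (e2 A1 t 0)); pose proof (Rabs_pos (e2 (e1 A1) t 0));
    pose proof (Rabs_pos (e2 (e2 A1) t 0)); pose proof (Rabs_pos (e1 A1 t 0)).
    set (a := Rabs (e2 A1 t 0)) in *. set (b := Rabs (e2 (e1 A1) t 0)) in *.
    set (g := Rabs (e2 (e2 A1) t 0)) in *. set (d := Rabs (e1 A1 t 0)) in *.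
    set (x := Rabs (T t)) in *. set (y := Rabs (T1 t)) in *. set (z := Rabs (P t)) in *.
    assert (0 <= a * x) by (apply Rmult_le_pos; auto).
    assert (0 <= b * y) by (apply Rmult_le_pos; auto).
    assert (0 <= b * z) by (apply Rmult_le_pos; auto).
    assert (0 <= g * x) by (apply Rmult_le_pos; auto).
    assert (0 <= g * y) by (apply Rmult_le_pos; auto).
    assert (0 <= d * y) by (apply Rmult_le_pos; auto).
    assert (0 <= d * z) by (apply Rmult_le_pos; auto).
    lra.
  - intro t.
    apply cont_sum; [apply cont_sum; [apply cont_sum; [apply cont_sum|]|]|];
      try (apply cont_abs; apply cont_der).
    + apply continuity_pt_const. intros a b; reflexivity.
    + exact (proj1 (sA1 [false] t 0)).
    + exact (proj1 (sA1 [false;true] t 0)).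
    + exact (proj1 (sA1 [false;false] t 0)).
    + exact (proj1 (sA1 [true] t 0)).
Qed.

Lemma isd3 (f g h : R -> R) df dg dh a b c t : is_derive f t df -> is_derive g t dg -> is_derive h t dh ->
  is_derive (fun s => a * f s + b * g s + c * h s) t (a * df + b * dg + c * dh).
Proof.
  intros H G K. pose proof (is_derive_unique _ _ _ H) as U. pose proof (is_derive_unique _ _ _ G) as V.
  pose proof (is_derive_unique _ _ _ K) as W.
  auto_derive.
  - repeat split; first [exists df; exact H | exists dg; exact G | exists dh; exact K].
  - change (Derive (fun x => f x) t) with (Derive f t).
    change (Derive (fun x => g x) t) with (Derive g t).
    change (Derive (fun x => h x) t) with (Derive h t). rewrite U, V, W. ring.
Qed.

Lemma sol_comb A1 A2 k0 k1 k2
  Ta Ta1 Ta2 Pa Pa1 ca ala Tb Tb1 Tb2 Pb Pb1 cb alb Tc Tc1 Tc2 Pc Pc1 cc alc :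
  sol A1 A2 Ta Ta1 Ta2 Pa Pa1 ca ala -> sol A1 A2 Tb Tb1 Tb2 Pb Pb1 cb alb ->
  sol A1 A2 Tc Tc1 Tc2 Pc Pc1 cc alc ->
  sol A1 A2 (fun t => k0 * Ta t + k1 * Tb t + k2 * Tc t)
    (fun t => k0 * Ta1 t + k1 * Tb1 t + k2 * Tc1 t)
    (fun t => k0 * Ta2 t + k1 * Tb2 t + k2 * Tc2 t)
    (fun t => k0 * Pa t + k1 * Pb t + k2 * Pc t)
    (fun t => k0 * Pa1 t + k1 * Pb1 t + k2 * Pc1 t)
    (k0 * ca + k1 * cb + k2 * cc) (k0 * ala + k1 * alb + k2 * alc).
Proof.
  intros [a1 [a2 [a3 [a4 [a5 a6]]]]] [b1 [b2 [b3 [b4 [b5 b6]]]]] [c1 [c2 [c3 [c4 [c5 c6]]]]].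
  split; [intro t; apply isd3; auto|].
  split; [intro t; apply isd3; auto|].
  split; [intro t; apply isd3; auto|].
  split; [|split]; intros t x.
  - pose proof (f_equal (Rmult k0) (a4 t x)); pose proof (f_equal (Rmult k1) (b4 t x));
    pose proof (f_equal (Rmult k2) (c4 t x)). lra.
  - pose proof (f_equal (Rmult k0) (a5 t x)); pose proof (f_equal (Rmult k1) (b5 t x));
    pose proof (f_equal (Rmult k2) (c5 t x)). lra.
  - pose proof (f_equal (Rmult k0) (a6 t x)); pose proof (f_equal (Rmult k1) (b6 t x));
    pose proof (f_equal (Rmult k2) (c6 t x)). lra.
Qed.

Lemma kill2 a0 a1 a2 b0 b1 b2 : exists k0 k1 k2, (k0 <> 0 \/ k1 <> 0 \/ k2 <> 0) /\
  k0 * a0 + k1 * a1 + k2 * a2 = 0 /\ k0 * b0 + k1 * b1 + k2 * b2 = 0.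
Proof.
  destruct (Req_dec (a1 * b2 - a2 * b1) 0) as [X0|X0];
  [destruct (Req_dec (a2 * b0 - a0 * b2) 0) as [Y0|Y0];
   [destruct (Req_dec (a0 * b1 - a1 * b0) 0) as [Z0|Z0]|]|].
  - destruct (Req_dec a0 0) as [A0|A0]; [destruct (Req_dec a1 0) as [A1|A1]|].
    + destruct (Req_dec b0 0) as [B0|B0]; [destruct (Req_dec b1 0) as [B1|B1]|].
      * exists 1, 0, 0. split; [left; lra|]. subst. split; ring.
      * exists b1, (- b0), 0. split; [left; auto|]. subst. split; ring.
      * exists b1, (- b0), 0. split; [right; left; lra|]. subst. split; ring.
    + exists a1, (- a0), 0. split; [left; auto|]. split; [ring|]. lra.
    + exists a1, (- a0), 0. split; [right; left; lra|]. split; [ring|]. lra.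
  - exists (a1 * b2 - a2 * b1), (a2 * b0 - a0 * b2), (a0 * b1 - a1 * b0).
    split; [right; right; auto|]. split; ring.
  - exists (a1 * b2 - a2 * b1), (a2 * b0 - a0 * b2), (a0 * b1 - a1 * b0).
    split; [right; left; auto|]. split; ring.
  - exists (a1 * b2 - a2 * b1), (a2 * b0 - a0 * b2), (a0 * b1 - a1 * b0).
    split; [left; auto|]. split; ring.
Qed.


Lemma finish (Q : nat -> vfield) k0 k1 k2
  Ta Ta1 Pa ca ala Tb Tb1 Pb cb alb Tc Tc1 Pc cc alc :
  (k0 <> 0 \/ k1 <> 0 \/ k2 <> 0) ->
  (forall t x u, vtau (Q 0%nat) t x u = Ta t /\ vxi (Q 0%nat) t x u = Pa t + (Ta1 t + ca) * x /\ veta (Q 0%nat) t x u = ca * u + ala) ->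
  (forall t x u, vtau (Q 1%nat) t x u = Tb t /\ vxi (Q 1%nat) t x u = Pb t + (Tb1 t + cb) * x /\ veta (Q 1%nat) t x u = cb * u + alb) ->
  (forall t x u, vtau (Q 2%nat) t x u = Tc t /\ vxi (Q 2%nat) t x u = Pc t + (Tc1 t + cc) * x /\ veta (Q 2%nat) t x u = cc * u + alc) ->
  (forall t, k0 * Ta t + k1 * Tb t + k2 * Tc t = 0 /\ k0 * Ta1 t + k1 * Tb1 t + k2 * Tc1 t = 0 /\
             k0 * Pa t + k1 * Pb t + k2 * Pc t = 0) ->
  k0 * ca + k1 * cb + k2 * cc = 0 -> k0 * ala + k1 * alb + k2 * alc = 0 ->
  exists c : nat -> R,
    (exists i, (i <= 2)%nat /\ c i <> 0) /\
    forall t x u,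
      sum_f_R0 (fun i => c i * vtau (Q i) t x u) 2 = 0 /\
      sum_f_R0 (fun i => c i * vxi (Q i) t x u) 2 = 0 /\
      sum_f_R0 (fun i => c i * veta (Q i) t x u) 2 = 0.
Proof.
  intros NZ Ra Rb Rc Z Zc Zal.
  exists (fun i => match i with 0%nat => k0 | 1%nat => k1 | _ => k2 end).
  split.
  - destruct NZ as [H|[H|H]]; [exists 0%nat | exists 1%nat | exists 2%nat]; split; auto.
  - intros t x u. simpl.
    destruct (Ra t x u) as [-> [-> ->]]. destruct (Rb t x u) as [-> [-> ->]].
    destruct (Rc t x u) as [-> [-> ->]].
    destruct (Z t) as [Z1 [Z2 Z3]].
    pose proof (f_equal (Rmult x) Z2). pose proof (f_equal (Rmult x) Zc).
    pose proof (f_equal (Rmult u) Zc).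
    split; [lra | split; lra].
Qed.

Theorem corollary21 (A1 A2 : R -> R -> R) :
  in_class_L1hat A1 A2 -> dim_at_most (lie_symmetry A1 A2) 2.
Proof.
  intros HC Q HQ.
  destruct (part1 _ _ (Q 0%nat) HC (HQ 0%nat ltac:(lia))) as [Ta [Ta1 [Ta2 [Pa [Pa1 [ca [ala [Sa Ra]]]]]]]].
  destruct (part1 _ _ (Q 1%nat) HC (HQ 1%nat ltac:(lia))) as [Tb [Tb1 [Tb2 [Pb [Pb1 [cb [alb [Sb Rb]]]]]]]].
  destruct (part1 _ _ (Q 2%nat) HC (HQ 2%nat ltac:(lia))) as [Tc [Tc1 [Tc2 [Pc [Pc1 [cc [alc [Sc Rc]]]]]]]].
  destruct (classic (forall t, (forall x, e2 A2 t x = 0) /\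
                    (forall x1 x2, e2 (e2 A1) t x1 = e2 (e2 A1) t x2))) as [Deg|NDeg].
  - destruct (kill2 (Ta 0) (Tb 0) (Tc 0) ala alb alc) as [k0 [k1 [k2 [NZ [K1 K2]]]]].
    pose proof (sol_comb A1 A2 k0 k1 k2 _ _ _ _ _ _ _ _ _ _ _ _ _ _ _ _ _ _ _ _ _ Sa Sb Sc) as S.
    destruct (zero_deg _ _ _ _ _ _ _ _ _ 0 HC S (fun t => proj1 (Deg t)) (fun t => proj2 (Deg t)) K1 K2)
      as [Hc [HT1 HP]].
    rewrite Hc, K2 in S.
    pose proof (sol_zero _ _ _ _ _ _ _ 0 HC S K1 HT1 HP) as Z.
    apply (finish Q k0 k1 k2 Ta Ta1 Pa ca ala Tb Tb1 Pb cb alb Tc Tc1 Pc cc alc); auto.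
  - apply not_all_ex_not in NDeg. destruct NDeg as [t0 Nt0].
    assert (ND : (exists x, e2 A2 t0 x <> 0) \/ (exists x1 x2, e2 (e2 A1) t0 x1 <> e2 (e2 A1) t0 x2)).
    { apply not_and_or in Nt0. destruct Nt0 as [N1|N1].
      - left. apply not_all_ex_not in N1. exact N1.
      - right. apply not_all_ex_not in N1. destruct N1 as [x1 N1].
        apply not_all_ex_not in N1. destruct N1 as [x2 N1]. exists x1, x2. exact N1. }
    destruct (kill2 (Ta t0) (Tb t0) (Tc t0) ca cb cc) as [k0 [k1 [k2 [NZ [K1 K2]]]]].
    pose proof (sol_comb A1 A2 k0 k1 k2 _ _ _ _ _ _ _ _ _ _ _ _ _ _ _ _ _ _ _ _ _ Sa Sb Sc) as S.
    destruct (zero_nondeg _ _ _ _ _ _ _ _ _ t0 HC S ND K1 K2) as [Hal [HT1 HP]].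
    rewrite K2, Hal in S.
    pose proof (sol_zero _ _ _ _ _ _ _ t0 HC S K1 HT1 HP) as Z.
    apply (finish Q k0 k1 k2 Ta Ta1 Pa ca ala Tb Tb1 Pb cb alb Tc Tc1 Pc cc alc); auto.
Qed.
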